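(* Let $F[n,x]$ be a formula of ZF$\varepsilon$ with parameters, and let $G,U\in\Lambda$ satisfy $G\Vdash\forall n\,\neg\forall x\,\neg F[n,x]$ and $U\Vdash\forall f\,\neg\forall n^{\mathbb N}F[n,f[n]]$. Put $H=\Psi GU$. Let $k\in\mathbb N$ and $\phi\in\Lambda$ be such that for every $i<k$ there is a set $a_i$ with $\phi\underline i\Vdash F[i,a_i]$. If $H\underline k\,\phi\not\Vdash\bot$, then there exist a set $a_k$ and a term $\zeta_{k,\phi}\in\Lambda$ such that $\zeta_{k,\phi}\Vdash F[k,a_k]$ and $(H\underline k^+)(\chi)\underline k\,\phi\,\zeta_{k,\phi}\not\Vdash\bot$, where $\underline k^+=(\sigma)\underline k$.
   Context: Fix an integer $N\ge 0$. The set $\Lambda$ of terms is the smallest set containing the constants $B,C,I,K,W,cc,A$ and $p,q_0,\dots,q_N$, closed under application $(\xi)\eta$ (written $\xi\eta$), and containing, for each sequence $(\xi_i)_{i\in\mathbb N}$ of closed terms (no occurrence of $p,q_0,\dots,q_N$), a constant $\bigwedge_i\xi_i$ (injectively, well-founded). Stacks: finite sequences $t_0\cdot\ldots\cdot t_{n-1}\cdot\pi_0$ of terms, $\pi_0$ the empty stack; $\Pi$ the set of stacks. $\ell_t=((C)(B)CB)t$, $k_{\pi_0}=A$, $k_{t\cdot\pi}=(\ell_t)k_\pi$; $\sigma=(BW)(C)(B)BB$, $\underline0=(K)I$, $\underline{n+1}=(\sigma)\underline n$. Execution $\succ$: least preorder on $\Lambda\times\Pi$ with $(\xi)\eta\star\pi\succ\xi\star\eta\cdot\pi$;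 $B\star\xi\cdot\eta\cdot\zeta\cdot\pi\succ\xi\star(\eta)\zeta\cdot\pi$; $C\star\xi\cdot\eta\cdot\zeta\cdot\pi\succ\xi\star\zeta\cdot\eta\cdot\pi$; $I\star\xi\cdot\pi\succ\xi\star\pi$; $K\star\xi\cdot\eta\cdot\pi\succ\xi\star\pi$; $W\star\xi\cdot\eta\cdot\pi\succ\xi\star\eta\cdot\eta\cdot\pi$; $cc\star\xi\cdot\pi\succ\xi\star k_\pi\cdot\pi$; $A\star\xi\cdot\pi\succ\xi\star\pi_0$; $\bigwedge_i\xi_i\star\underline n\cdot\pi\succ\xi_n\star\pi$. Pole $\perp\!\!\!\perp=\{\xi\star\pi:\exists\varpi,\ \xi\star\pi\succ p\star\varpi\}$. $\lambda$-terms are translated into terms by the usual combinatory translation. Let $\mathbf0=\lambda x\lambda y\,y$, $\mathbf1=\lambda x\lambda y\,x$, $\mathsf a=\lambda x\lambda y\,yx$, $(i<k)=((k\mathsf a)\lambda d\,\mathbf0)(i\mathsf a)\lambda d\,\mathbf1$, $\chi=\lambda k\lambda f\lambda z\lambda i((i<k)(f)i)z$, $k^+=(\sigma)k$, $X=\lambda x\lambda f(f)(x)xf$, $Y=XX$, $\Psi=\lambda g\lambda u(Y)\lambda h\lambda k\lambda f(u)(\chi kf)(g)\lambda z(hk^+)(\chi)kfz$. Realizability is Krivine's classical realizability for ZF$\varepsilon$ over a ground model of ZF: $\xi\Vdash F$ iff $\xi\star\pi\in\perp\!\!\!\perp$ for all $\pi\in\|F\|$; $\|\bot\|=\Pi$,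 $\|A\to B\|=\{\eta\cdot\pi:\eta\Vdash A,\pi\in\|B\|\}$, $\|\forall xF[x]\|=\bigcup_a\|F[a]\|$, $\neg A$ is $A\to\bot$, $\|\forall n^{\mathbb N}F[n]\|=\{\underline n\cdot\pi:n\in\mathbb N,\pi\in\|F[n]\|\}$; $\xi\not\Vdash F$ means $\xi\Vdash F$ fails. $f[n]=\mathrm{app}(f,n)=\{y:(n,y)\in f\}$. *)

(* Defs.v *)
From Stdlib Require Import Arith List Relations.
Import ListNotations.

Inductive term : Type :=
| tB | tC | tI | tK | tW | tcc | tA
| tp
| tq (j : nat)            (* q_j, only j <= N is legal, see [valid] *)
| tapp (t u : term)
| tbig (f : nat -> term). (* /\_i f i *)

Fixpoint noparam (t : term) : Prop :=
  match t with
  | tp => False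
  | tq _ => False
  | tapp t u => noparam t /\ noparam u
  | tbig f => forall i, noparam (f i)
  | _ => True
  end.

(** membership in Lambda (for the fixed N) *)
Fixpoint valid (N : nat) (t : term) : Prop :=
  match t with
  | tq j => j <= N
  | tapp t u => valid N t /\ valid N u
  | tbig f => forall i, valid N (f i) /\ noparam (f i)
  | _ => True
  end.

Definition stack := list term.
Definition validstack (N : nat) (pi : stack) : Prop := Forall (valid N) pi.

Definition sigma : term := tapp (tapp tB tW) (tapp tC (tapp (tapp tB tB) tB)).
Fixpoint num (n : nat) : term :=
  match n with
  | O => tapp tK tI
  | S n => tapp sigma (num n)
  end.
Definition ell (t : term) : term := tapp (tapp tC (tapp (tapp tB tC) tB)) t.
Fixpoint kont (pi : stack) : term :=
  match pi with
  | [] => tA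
  | t :: pi => tapp (ell t) (kont pi)
  end.

Inductive step : term * stack -> term * stack -> Prop :=
| s_push t u pi : step (tapp t u, pi) (t, u :: pi)
| s_B x y z pi : step (tB, x :: y :: z :: pi) (x, tapp y z :: pi)
| s_C x y z pi : step (tC, x :: y :: z :: pi) (x, z :: y :: pi)
| s_I x pi : step (tI, x :: pi) (x, pi)
| s_K x y pi : step (tK, x :: y :: pi) (x, pi)
| s_W x y pi : step (tW, x :: y :: pi) (x, y :: y :: pi)
| s_cc x pi : step (tcc, x :: pi) (x, kont pi :: pi)
| s_A x pi : step (tA, x :: pi) (x, [])
| s_big f n pi : step (tbig f, num n :: pi) (f n, pi).

Definition exec : term * stack -> term * stack -> Prop := clos_refl_trans _ step.

Definition pole (xi : term) (pi : stack) : Prop :=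
  exists varpi, exec (xi, pi) (tp, varpi).

Definition fval := stack -> Prop.

(** xi ||- F ; only genuine stacks (elements of Pi) are tested *)
Definition realizes (N : nat) (xi : term) (A : fval) : Prop :=
  forall pi, validstack N pi -> A pi -> pole xi pi.

Definition bot (N : nat) : fval := fun pi => validstack N pi.

Definition arrow (N : nat) (A B : fval) : fval :=
  fun pi => exists eta pi', pi = eta :: pi' /\ valid N eta /\ realizes N eta A /\ B pi'.

Definition neg (N : nat) (A : fval) : fval := arrow N A (bot N).

Definition forallV {V : Type} (P : V -> fval) : fval :=
  fun pi => exists a, P a pi.

Definition forallN (P : nat -> fval) : fval :=
  fun pi => exists n pi', pi = num n :: pi' /\ P n pi'.

Inductive lam : Type :=
| LV (x : nat) | LA (t u : lam) | LL (x : nat) (t : lam) | LC (c : term).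

Inductive cterm : Type :=
| CV (x : nat) | CK (c : term) | CAp (t u : cterm).

Fixpoint occurs (x : nat) (c : cterm) : bool :=
  match c with
  | CV y => Nat.eqb x y
  | CK _ => false
  | CAp t u => occurs x t || occurs x u
  end.

(* S = B (B W) (B B C) :  S * a.b.c.pi  >-  a * c.(b)c.pi *)
Definition Scomb : term := tapp (tapp tB (tapp tB tW)) (tapp (tapp tB tB) tC).

Fixpoint abs (x : nat) (c : cterm) : cterm :=
  if occurs x c then
    match c with
    | CV _ => CK tI
    | CK _ => CAp (CK tK) c
    | CAp t u =>
        if occurs x t then
          if occurs x u then CAp (CAp (CK Scomb) (abs x t)) (abs x u)
          else CAp (CAp (CK tC) (abs x t)) u
        else CAp (CAp (CK tB) t) (abs x u)
    end
  else CAp (CK tK) c.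

Fixpoint tr (t : lam) : cterm :=
  match t with
  | LV x => CV x
  | LA t u => CAp (tr t) (tr u)
  | LL x t => abs x (tr t)
  | LC c => CK c
  end.

Fixpoint close (c : cterm) : term :=
  match c with
  | CV _ => tI (* never reached for closed lambda-terms *)
  | CK c => c
  | CAp t u => tapp (close t) (close u)
  end.

Definition lam2term (t : lam) : term := close (tr t).

Definition vx := 0. Definition vy := 1. Definition vd := 2.
Definition vk := 3. Definition vf := 4. Definition vz := 5. Definition vi := 6.
Definition vh := 7. Definition vg := 8. Definition vu := 9.
Definition vX := 10. Definition vF := 11.

Definition zeroL : lam := LL vx (LL vy (LV vy)).
Definition oneL : lam := LL vx (LL vy (LV vx)).
Definition aL : lam := LL vx (LL vy (LA (LV vy) (LV vx))).

Definition ltL (i k : lam) : lam :=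
  LA (LA (LA k aL) (LL vd zeroL)) (LA (LA i aL) (LL vd oneL)).

Definition chiL : lam :=
  LL vk (LL vf (LL vz (LL vi
    (LA (LA (ltL (LV vi) (LV vk)) (LA (LV vf) (LV vi))) (LV vz))))).
Definition chi : term := lam2term chiL.

Definition XL : lam := LL vX (LL vF (LA (LV vF) (LA (LA (LV vX) (LV vX)) (LV vF)))).
Definition YL : lam := LA XL XL.

Definition PsiL : lam :=
  LL vg (LL vu (LA YL (LL vh (LL vk (LL vf
    (LA (LV vu)
      (LA (LA (LA (LC chi) (LV vk)) (LV vf))
        (LA (LV vg)
          (LL vz (LA (LA (LV vh) (LA (LC sigma) (LV vk)))
                     (LA (LA (LA (LC chi) (LV vk)) (LV vf)) (LV vz)))))))))))).
Definition Psi : term := lam2term PsiL.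

(* Main.v *)
Require Import Defs.
From Stdlib Require Import Arith List Relations Lia Classical.
Import ListNotations.


Definition state := (term * stack)%type.

Definition step1 (st : state) : option state :=
  match st with
  | (tapp t u, pi) => Some (t, u :: pi)
  | (tB, x :: y :: z :: pi) => Some (x, tapp y z :: pi)
  | (tC, x :: y :: z :: pi) => Some (x, z :: y :: pi)
  | (tI, x :: pi) => Some (x, pi)
  | (tK, x :: y :: pi) => Some (x, pi)
  | (tW, x :: y :: pi) => Some (x, y :: y :: pi)
  | (tcc, x :: pi) => Some (x, kont pi :: pi)
  | (tA, x :: pi) => Some (x, [])
  | _ => None
  end.

Lemma step1_sound : forall s s', step1 s = Some s' -> step s s'.
Proof.
  intros [t pi] s' H.
  destruct t; simpl in H; try discriminate;
  repeat (match type of H with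
          | context [match ?l with _ => _ end] => destruct l; try discriminate
          end);
  inversion H; subst; constructor.
Qed.

Fixpoint iter (n : nat) (s : state) : state :=
  match n with
  | 0 => s
  | S n => match step1 s with Some s' => iter n s' | None => s end
  end.

Lemma exec_iter : forall n s, exec s (iter n s).
Proof.
  induction n; intros s; simpl.
  - apply rt_refl.
  - destruct (step1 s) eqn:E.
    + eapply rt_trans; [apply rt_step; apply step1_sound; exact E | apply IHn].
    + apply rt_refl.
Qed.

Lemma exec_trans : forall a b c, exec a b -> exec b c -> exec a c.
Proof. intros; eapply rt_trans; eauto. Qed.

Lemma step_det : forall s s1 s2, step s s1 -> step s s2 -> s1 = s2.
Proof.
  intros s s1 s2 H1 H2; inversion H1; subst; inversion H2; subst; try reflexivity;
  try (match goal with H : num _ = num _ |- _ =>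
         apply (f_equal (fun x => x)) in H end).
  (* big case: num n = num n0 *)
  all: try match goal with H : num ?n = num ?m |- _ =>
    assert (n = m) by (clear -H; revert m H; induction n; intros [|m] H; simpl in H;
                        inversion H; auto); subst end; reflexivity.
Qed.

Lemma no_step_p : forall v s, ~ step (tp, v) s.
Proof. intros v s H; inversion H. Qed.

Inductive stepn : nat -> state -> state -> Prop :=
| sn0 s : stepn 0 s s
| snS n s s' s'' : step s s' -> stepn n s' s'' -> stepn (S n) s s''.

Lemma exec_stepn : forall s s', exec s s' -> exists n, stepn n s s'.
Proof.
  intros s s' H. apply clos_rt_rt1n in H. induction H.
  - exists 0; constructor.
  - destruct IHclos_refl_trans_1n as [n Hn]. exists (S n); econstructor; eauto.
Qed.

Lemma stepn_exec : forall n s s', stepn n s s' -> exec s s'.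
Proof.
  induction 1. apply rt_refl. eapply rt_trans; [apply rt_step; eauto| eauto].
Qed.

Lemma stepn_det : forall n s t, stepn n s t -> (forall u, ~ step t u) ->
  forall m s', stepn m s s' -> m <= n /\ stepn (n - m) s' t.
Proof.
  induction n; intros s t H Ht m s' H'.
  - inversion H; subst. inversion H'; subst.
    + split; auto.
    + exfalso; eapply Ht; eauto.
  - inversion H; subst. inversion H'; subst.
    + split; [lia|]. simpl. exact H.
    + assert (s'1 = s'0) by (eapply step_det; eauto). subst.
      destruct (IHn _ _ H2 Ht _ _ H3) as [Hle Hs]. split; [lia|]. simpl. exact Hs.
Qed.

Lemma pole_fwd : forall t pi t' pi', pole t pi -> exec (t, pi) (t', pi') -> pole t' pi'.
Proof.
  intros t pi t' pi' [v Hv] H.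
  apply exec_stepn in Hv as [n Hn]. apply exec_stepn in H as [m Hm].
  destruct (stepn_det _ _ _ Hn (no_step_p v) _ _ Hm) as [_ Hs].
  exists v. eapply stepn_exec; eauto.
Qed.

Lemma pole_bwd : forall t pi t' pi', exec (t, pi) (t', pi') -> pole t' pi' -> pole t pi.
Proof.
  intros t pi t' pi' H [v Hv]. exists v. eapply rt_trans; eauto.
Qed.

Definition poleS (s : state) := pole (fst s) (snd s).

Lemma poleS_fwd : forall s s', poleS s -> exec s s' -> poleS s'.
Proof. intros [] [] H E; eapply pole_fwd; eauto. Qed.
Lemma poleS_bwd : forall s s', exec s s' -> poleS s' -> poleS s.
Proof. intros [] [] E H; eapply pole_bwd; eauto. Qed.

Lemma stuck_not_pole : forall s s', exec s s' -> (forall u, ~ step s' u) ->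
  fst s' <> tp -> ~ poleS s.
Proof.
  intros s s' E Hs Hp Hpole.
  pose proof (poleS_fwd _ _ Hpole E) as [v Hv].
  apply clos_rt_rt1n in Hv. inversion Hv; subst.
  - apply Hp; auto.
  - destruct s'; eapply Hs; eauto.
Qed.

(* progress measure: pole s -> exists n, s reaches p in n steps *)
Definition pdist (n : nat) (s : state) := exists v, stepn n s (tp, v).

Lemma pole_pdist : forall s, poleS s -> exists n, pdist n s.
Proof.
  intros [t pi] [v Hv]. apply exec_stepn in Hv as [n Hn]. exists n, v; exact Hn.
Qed.

Lemma pdist_fwd : forall n s m s', pdist n s -> stepn m s s' -> m <= n /\ pdist (n - m) s'.
Proof.
  intros n s m s' [v Hv] H.
  destruct (stepn_det _ _ _ Hv (no_step_p v) _ _ H) as [Hle Hs].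
  split; auto. exists v; auto.
Qed.


Definition Scomb_ := Scomb.
Definition P : term := (tapp (tapp tB (tapp tB (tapp Scomb (tapp (tapp tB Scomb) (tapp (tapp tC (tapp (tapp tB tB) (tapp (tapp tB chi) tI))) tI))))) (tapp (tapp tC (tapp (tapp tB tB) (tapp (tapp tB tB) (tapp (tapp tB tB) tI)))) (tapp (tapp tC (tapp (tapp tB Scomb) (tapp (tapp tB (tapp tB tB)) (tapp (tapp tB (tapp tB tB)) (tapp (tapp tC (tapp (tapp tB tB) tI)) (tapp (tapp tB sigma) tI)))))) (tapp (tapp tC (tapp (tapp tB tC) (tapp (tapp tB (tapp tB tB)) (tapp (tapp tC (tapp (tapp tB tB) (tapp (tapp tB chi) tI))) tI)))) tI)))).
Definition Q : term := (tapp (tapp tC (tapp (tapp tB tB) (tapp (tapp tB tB) (tapp (tapp tB tB) tI)))) (tapp (tapp tC (tapp (tapp tB Scomb) (tapp (tapp tB (tapp tB tB)) (tapp (tapp tB (tapp tB tB)) (tapp (tapp tC (tapp (tapp tB tB) tI)) (tapp (tapp tB sigma) tI)))))) (tapp (tapp tC (tapp (tapp tB tC) (tapp (tapp tB (tapp tB tB)) (tapp (tapp tC (tapp (tapp tB tB) (tapp (tapp tB chi) tI))) tI)))) tI))).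
Definition Lc : term := (tapp tC (tapp (tapp tB Scomb) (tapp (tapp tB (tapp tB tB)) (tapp (tapp tB (tapp tB tB)) (tapp (tapp tC (tapp (tapp tB tB) tI)) (tapp (tapp tB sigma) tI)))))).
Definition CF0 : term := (tapp (tapp tC (tapp (tapp tB tC) (tapp (tapp tB (tapp tB tB)) (tapp (tapp tC (tapp (tapp tB tB) (tapp (tapp tB chi) tI))) tI)))) tI).
Definition A1 : term := (tapp (tapp tC (tapp (tapp tB tB) (tapp (tapp Scomb tI) tI))) tI).
Definition A2 : term := (tapp (tapp tB (tapp Scomb tI)) (tapp (tapp tC (tapp (tapp tB tB) (tapp (tapp Scomb tI) tI))) tI)).
Definition Tc : term := (tapp tB (tapp tC (tapp (tapp tB tB) (tapp (tapp tB tB) (tapp (tapp tB tB) tI))))).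

Fixpoint wrap (a : nat) (t : term) : term :=
  match a with 0 => t | S a => tapp tI (wrap a t) end.

Definition a_ := tapp (tapp tB (tapp tC tI)) tI.
Definition ld0 := tapp tK (num 0).
Definition one_ := tapp (tapp tB tK) tI.
Definition ld1 := tapp tK one_.
Definition Wu (u : term) := tapp (tapp (tapp tC (tapp (tapp tC tI) a_)) ld1) u.
Definition FBc := tapp (tapp tC (tapp (tapp tB tB) tI)) tI.
Definition FB (f u : term) := tapp (tapp FBc f) u.
Definition Xt (G y k f : term) := tapp (tapp (tapp (tapp P G) y) k) f.
Definition Zt (G y k f : term) := tapp (tapp (tapp (tapp Q G) y) k) f.
Definition Lt (y k f : term) := tapp (tapp (tapp (tapp Lc CF0) y) k) f.
Definition Yc (G U : term) (a b : nat) :=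
  tapp (tapp A1 (wrap a A2)) (wrap b (tapp (tapp (tapp Tc P) G) U)).
Definition CF (k f z : term) := tapp (tapp (tapp CF0 k) f) z.
Definition chiapp (k f z : term) := tapp (tapp (tapp chi k) f) z.
Definition BsI (k : term) := tapp (tapp (tapp tB sigma) tI) k.
Definition Wk (k : term) := tapp (tapp k a_) ld0.

Lemma wrap_exec : forall a t s, exec (wrap a t, s) (t, s).
Proof.
  induction a; intros; simpl. apply rt_refl.
  eapply rt_trans; [apply rt_step; constructor|].
  eapply rt_trans; [apply rt_step; constructor|]. apply IHa.
Qed.

Ltac runn n := eapply exec_trans; [apply (exec_iter n)|]; vm_compute.
Ltac fin := apply rt_refl.

Lemma M_sigma : forall k f x s, exec (tapp sigma k, f::x::s) (f, tapp (tapp k f) x :: s).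
Proof. intros. runn 14. fin. Qed.
Lemma M_BsI : forall k f x s, exec (BsI k, f::x::s) (f, tapp (tapp (tapp tI k) f) x :: s).
Proof. intros. runn 17. fin. Qed.
Lemma M_Psi : forall G U k f pi,
  exec (tapp (tapp (tapp (tapp Psi G) U) k) f, pi) (U, Xt G (Yc G U 0 0) k f :: pi).
Proof. intros. runn 52. fin. Qed.
Lemma M_X : forall G y k f u r,
  exec (Xt G y k f, u::r) (chi, tapp tI k :: tapp tI f :: Zt G y k f :: u :: r).
Proof. intros. runn 53. fin. Qed.
Lemma M_Z : forall G y k f r, exec (Zt G y k f, r) (G, Lt y k f :: r).
Proof. intros. runn 23. fin. Qed.
Lemma M_L : forall y k f z r, exec (Lt y k f, z::r) (y, BsI k :: CF k f z :: r).
Proof. intros. runn 49. fin. Qed.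
Lemma M_Y : forall G U a b k f s,
  exec (Yc G U a b, k::f::s) (U, Xt G (Yc G U (S a) (S b)) k f :: s).
Proof.
  intros. runn 27. eapply exec_trans; [apply wrap_exec|].
  runn 21. eapply exec_trans; [apply wrap_exec|]. runn 23. fin.
Qed.
Lemma M_CF : forall k f z u r,
  exec (CF k f z, u::r) (chi, tapp tI k :: tapp tI f :: tapp tI z :: u :: r).
Proof. intros. runn 30. fin. Qed.
Lemma M_chiapp : forall k f z u r, exec (chiapp k f z, u::r) (chi, k::f::z::u::r).
Proof. intros. runn 3. fin. Qed.
Lemma M_chi : forall k f z u r,
  exec (chi, k::f::z::u::r) (k, a_::ld0::Wu u::FB f u::tapp tI z::r).
Proof. intros. runn 65. fin. Qed.
Lemma M_FB : forall f u r, exec (FB f u, r) (f, tapp tI u :: r).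
Proof. intros. runn 11. fin. Qed.
Lemma M_a : forall x y r, exec (a_, x::y::r) (y, tapp tI x :: r).
Proof. intros. runn 6. fin. Qed.


Lemma M_Wu : forall u x r, exec (Wu u, x::r) (u, a_::ld1::x::r).
Proof. intros. runn 8. fin. Qed.
Lemma M_ld0 : forall y r, exec (ld0, y::r) (num 0, r).
Proof. intros. runn 2. fin. Qed.
Lemma M_ld1 : forall w F Z r, exec (ld1, w::F::Z::r) (F, r).
Proof. intros. runn 8. fin. Qed.
Lemma M_n0 : forall x y r, exec (num 0, x::y::r) (y, r).
Proof. intros. runn 3. fin. Qed.
Lemma M_Wk : forall k y r, exec (Wk k, y::r) (k, a_::ld0::y::r).
Proof. intros. runn 2. fin. Qed.
Lemma M_I : forall t r, exec (tapp tI t, r) (t, r).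
Proof. intros. runn 2. fin. Qed.

Fixpoint NL (m : nat) (k : term) : Prop :=
  match m with
  | 0 => forall f x s, exec (k, f::x::s) (x, s)
  | S m => forall f x s, exists k', NL m k' /\ exec (k, f::x::s) (f, tapp (tapp k' f) x :: s)
  end.

Lemma NL_I : forall m k, NL m k -> NL m (tapp tI k).
Proof.
  destruct m; simpl; intros k H f x s.
  - eapply exec_trans; [apply M_I|]. apply H.
  - destruct (H f x s) as [k' [Hk' E]]. exists k'; split; auto.
    eapply exec_trans; [apply M_I|]. exact E.
Qed.

Lemma NL_wrap : forall a m k, NL m k -> NL m (wrap a k).
Proof. induction a; simpl; auto using NL_I. Qed.

Lemma NL_sigma : forall m k, NL m k -> NL (S m) (tapp sigma k).
Proof. simpl; intros m k H f x s. exists k; split; auto. apply M_sigma. Qed.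

Lemma NL_BsI : forall m k, NL m k -> NL (S m) (BsI k).
Proof. simpl; intros m k H f x s. exists (tapp tI k); split; auto using NL_I. apply M_BsI. Qed.

Lemma NL_num : forall m, NL m (num m).
Proof.
  induction m; simpl.
  - intros; apply M_n0.
  - intros f x s. exists (num m); split; auto. apply M_sigma.
Qed.

Lemma loop : forall m n k u V F Z s, NL m k -> NL n u ->
  (forall x r, exec (V, x::r) (u, a_::ld1::x::r)) ->
  exec (k, a_::ld0::V::F::Z::s) (if n <? m then (F, s) else (Z, s)).
Proof.
  induction m; intros n k u V F Z s Hk Hu HV.
  - simpl in Hk. eapply exec_trans; [apply Hk|].
    eapply exec_trans; [apply M_ld0|].
    destruct n; simpl; apply M_n0.
  - simpl in Hk. destruct (Hk a_ ld0 (V::F::Z::s)) as [k' [Hk' E]].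
    eapply exec_trans; [apply E|].
    eapply exec_trans; [apply M_a|].
    eapply exec_trans; [apply HV|].
    destruct n.
    + simpl in Hu. eapply exec_trans; [apply Hu|].
      simpl. apply M_ld1.
    + simpl in Hu. destruct (Hu a_ ld1 (tapp tI (tapp (tapp k' a_) ld0) :: F :: Z :: s))
        as [u' [Hu' E2]].
      eapply exec_trans; [apply E2|].
      eapply exec_trans; [apply M_a|].
      eapply exec_trans; [apply M_I|].
      eapply exec_trans; [apply (M_Wk k')|].
      replace (S n <? S m) with (n <? m) by reflexivity.
      apply IHm with (u := u'); auto.
      intros x r. eapply exec_trans; [apply M_I|].
      eapply exec_trans; [apply rt_step; constructor|].
      eapply exec_trans; [apply rt_step; constructor|]. apply rt_refl.
Qed.

Lemma chi_val : forall m n k f z u r, NL m k -> NL n u ->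
  exec (chi, k::f::z::u::r) (if n <? m then (f, tapp tI u :: r) else (z, r)).
Proof.
  intros. eapply exec_trans; [apply M_chi|].
  eapply exec_trans; [apply loop with (m:=m) (n:=n) (u:=u); auto; intros; apply M_Wu|].
  destruct (n <? m). apply M_FB. apply M_I.
Qed.


Definition Prog (Rel : state -> state -> state -> Prop) (S1 S2 S3 : state) : Prop :=
  poleS S1 \/ exists S1' S2' S3', exec S1 S1' /\ (exists m, 0 < m /\ stepn m S2 S2') /\
     exec S3 S3' /\ Rel S1' S2' S3'.

Theorem sim_gen (Rel : state -> state -> state -> Prop) (Good : state -> Prop)
  (Hloc : forall S1 S2 S3, Rel S1 S2 S3 -> poleS S2 -> poleS S3 -> Good S1 -> Prog Rel S1 S2 S3)
  (HG : forall S S', Good S -> exec S S' -> Good S') :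
  forall S1 S2 S3, Rel S1 S2 S3 -> poleS S2 -> poleS S3 -> Good S1 -> poleS S1.
Proof.
  intros S1 S2 S3 HR P2 P3 G1.
  destruct (pole_pdist _ P2) as [n Hn].
  revert S1 S2 S3 HR P2 P3 G1 Hn.
  induction n as [n IH] using lt_wf_ind.
  intros S1 S2 S3 HR P2 P3 G1 Hn.
  destruct (Hloc _ _ _ HR P2 P3 G1) as [H|[S1' [S2' [S3' [E1 [[m [Hm E2]] [E3 HR']]]]]]]; auto.
  destruct (pdist_fwd _ _ _ _ Hn E2) as [Hle Hn'].
  apply (poleS_bwd _ _ E1).
  apply (IH (n - m)) with S2' S3'; auto; try lia.
  - eapply poleS_fwd; [exact P2| eapply stepn_exec; eauto].
  - eapply poleS_fwd; eauto.
  - eapply HG; eauto.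
Qed.

Inductive F3 (R : term -> term -> term -> Prop) : stack -> stack -> stack -> Prop :=
| F3nil : F3 R [] [] []
| F3cons a b c l1 l2 l3 : R a b c -> F3 R l1 l2 l3 -> F3 R (a::l1) (b::l2) (c::l3).

Definition RelT (R : term -> term -> term -> Prop) (S1 S2 S3 : state) : Prop :=
  R (fst S1) (fst S2) (fst S3) /\ F3 R (snd S1) (snd S2) (snd S3).

Lemma stuck_false : forall S S', poleS S -> exec S S' -> (forall u, ~ step S' u) -> fst S' <> tp -> False.
Proof. intros S S' P E H1 H2. eapply stuck_not_pole; eauto. Qed.

Lemma stepn1 : forall s s', step s s' -> stepn 1 s s'.
Proof. intros; econstructor; eauto; constructor. Qed.

Lemma stepn_plus : forall s s' s'', step s s' -> exec s' s'' -> exists m, 0 < m /\ stepn m s s''.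
Proof.
  intros s s' s'' H E. apply exec_stepn in E as [m Hm]. exists (S m); split; [lia|].
  econstructor; eauto.
Qed.

Section Generic.
Variable R : term -> term -> term -> Prop.
Hypothesis Rrefl : forall t, R t t t.
Hypothesis Rapp : forall a1 a2 a3 b1 b2 b3, R a1 a2 a3 -> R b1 b2 b3 ->
  R (tapp a1 b1) (tapp a2 b2) (tapp a3 b3).
Hypothesis Rnum : forall u1 u2 u3 n, R u1 u2 u3 -> u2 = num n -> u1 = num n /\ u3 = num n.

Lemma F3_kont : forall s1 s2 s3, F3 R s1 s2 s3 -> R (kont s1) (kont s2) (kont s3).
Proof.
  induction 1; simpl; auto. apply Rapp; auto. unfold ell. apply Rapp; auto.
Qed.

Lemma mk_prog : forall Rel S1 S2 S3 S1' S2' S3', step S1 S1' -> step S2 S2' -> step S3 S3' ->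
  Rel S1' S2' S3' -> Prog Rel S1 S2 S3.
Proof.
  intros. right. exists S1', S2', S3'. split; [apply rt_step; auto|].
  split; [exists 1; split; [lia|]; auto using stepn1|]. split; [apply rt_step; auto|auto].
Qed.

Lemma pole_cases : forall S, poleS S -> fst S = tp \/ exists S', step S S'.
Proof.
  intros [t pi] [v Hv]. apply clos_rt_rt1n in Hv. inversion Hv; subst; simpl; auto.
  right; eauto.
Qed.

Lemma refl_head : forall c s1 s2 s3, F3 R s1 s2 s3 -> poleS (c, s2) ->
  Prog (RelT R) (c, s1) (c, s2) (c, s3).
Proof.
  intros c s1 s2 s3 HF P2.
  destruct (pole_cases _ P2) as [Hp|[S' Hs]].
  - simpl in Hp; subst. left. exists s1. apply rt_refl.
  - inversion Hs; subst.
    + eapply mk_prog; [constructor|constructor|constructor|]; split; simpl; [auto using F3_kont| repeat (constructor; auto using F3_kont); auto].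
    + inversion HF as [|a1 b1 c1 l1 l2 l3 Ha HF1]; subst.
      inversion HF1 as [|a2 b2 c2 l1' l2' l3' Hb HF2]; subst.
      inversion HF2 as [|a3 b3 c3 l1'' l2'' l3'' Hc HF3]; subst.
      eapply mk_prog; [constructor|constructor|constructor|]; split; simpl; [auto using F3_kont| repeat (constructor; auto using F3_kont); auto].
    + inversion HF as [|a1 b1 c1 l1 l2 l3 Ha HF1]; subst.
      inversion HF1 as [|a2 b2 c2 l1' l2' l3' Hb HF2]; subst.
      inversion HF2 as [|a3 b3 c3 l1'' l2'' l3'' Hc HF3]; subst.
      eapply mk_prog; [constructor|constructor|constructor|]; split; simpl; [auto using F3_kont| repeat (constructor; auto using F3_kont); auto].
    + inversion HF as [|a1 b1 c1 l1 l2 l3 Ha HF1]; subst.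
      eapply mk_prog; [constructor|constructor|constructor|]; split; simpl; [auto using F3_kont| repeat (constructor; auto using F3_kont); auto].
    + inversion HF as [|a1 b1 c1 l1 l2 l3 Ha HF1]; subst.
      inversion HF1 as [|a2 b2 c2 l1' l2' l3' Hb HF2]; subst.
      eapply mk_prog; [constructor|constructor|constructor|]; split; simpl; [auto using F3_kont| repeat (constructor; auto using F3_kont); auto].
    + inversion HF as [|a1 b1 c1 l1 l2 l3 Ha HF1]; subst.
      inversion HF1 as [|a2 b2 c2 l1' l2' l3' Hb HF2]; subst.
      eapply mk_prog; [constructor|constructor|constructor|]; split; simpl; [auto using F3_kont| repeat (constructor; auto using F3_kont); auto].
    + inversion HF as [|a1 b1 c1 l1 l2 l3 Ha HF1]; subst.
      eapply mk_prog; [constructor|constructor|constructor|]; split; simpl; [auto using F3_kont| repeat (constructor; auto using F3_kont); auto].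
    + inversion HF as [|a1 b1 c1 l1 l2 l3 Ha HF1]; subst.
      eapply mk_prog; [constructor|constructor|constructor|]; split; simpl; [auto using F3_kont| repeat (constructor; auto using F3_kont); auto].
    + inversion HF as [|a1 b1 c1 l1 l2 l3 Ha HF1]; subst.
      destruct (Rnum _ _ _ _ Ha eq_refl) as [-> ->].
      eapply mk_prog; [constructor|constructor|constructor|]; split; simpl; [auto using F3_kont| repeat (constructor; auto using F3_kont); auto].
Qed.
End Generic.


Definition sig1 := tapp tB tW.
Definition sig2 := tapp tC (tapp (tapp tB tB) tB).
Definition sig3 := tapp (tapp tB tB) tB.
Definition sig4 := tapp tB tB.

Definition NP (t : term) : Prop :=
  (exists n, t = num n) \/ t = sigma \/ t = sig1 \/ t = tB \/ t = tW \/ t = sig2 \/ t = tC \/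
  t = sig3 \/ t = sig4 \/ t = tK \/ t = tI.

Lemma NP_app : forall a b, NP (tapp a b) -> NP a /\ NP b.
Proof.
  unfold NP, sigma, sig1, sig2, sig3, sig4.
  intros a b [[n H]|H].
  - destruct n; simpl in H; inversion H; subst; split; eauto 20.
  - repeat destruct H as [H|H]; inversion H; subst; split; eauto 20.
    all: (right; repeat (try (left; reflexivity); right)); reflexivity.
Qed.

Lemma num_neq_sigma : forall n, num n <> sigma.
Proof. destruct n; simpl; discriminate. Qed.

Ltac notNP := unfold NP; let n := fresh "n" in let H := fresh "H" in
  intros [[n H]|H];
  [ destruct n; simpl in *; discriminate |
    destruct H as [H|[H|[H|[H|[H|[H|[H|[H|[H|H]]]]]]]]]; discriminate ].

Inductive IwN : term -> nat -> Prop :=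
| iw0 : IwN (num 0) 0
| iwS u n : IwN u n -> IwN (tapp sigma u) (S n)
| iwI u n : IwN u n -> IwN (tapp tI u) n.

Lemma IwN_num : forall n, IwN (num n) n.
Proof. induction n; simpl; constructor; auto. Qed.

Lemma IwN_NL : forall u n, IwN u n -> NL n u.
Proof. induction 1. apply NL_num. apply NL_sigma; auto. apply NL_I; auto. Qed.

Fixpoint size (t : term) : nat :=
  match t with tapp a b => S (size a + size b) | _ => 1 end.

Lemma exec_neq_plus : forall s s', exec s s' -> s <> s' -> exists m, 0 < m /\ stepn m s s'.
Proof.
  intros s s' E Hn. apply exec_stepn in E as [m Hm]. destruct m.
  - inversion Hm; subst; congruence.
  - exists (S m); split; auto; lia.
Qed.


Lemma num_inj : forall n m, num n = num m -> n = m.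
Proof. induction n; intros [|m] H; simpl in H; inversion H; auto. Qed.

Lemma num_not : forall n, num n <> tK /\ num n <> tI /\ num n <> tB /\ num n <> tW /\ num n <> tC
  /\ num n <> sigma /\ num n <> sig1 /\ num n <> sig2 /\ num n <> sig3 /\ num n <> sig4.
Proof. destruct n; simpl; repeat split; discriminate. Qed.

Lemma NP_app_cases : forall a b, NP (tapp a b) ->
  (a = sigma /\ exists n, b = num n) \/
  (NP a /\ NP b /\ (forall n, a <> num n) /\ (forall n, b <> num n)).
Proof.
  intros a b H. pose proof (NP_app _ _ H) as [Ha Hb].
  unfold NP in H. destruct H as [[n H]|H].
  - destruct n; simpl in H; inversion H; subst.
    + right; repeat split; auto; intros m Hm; destruct m; simpl in Hm; discriminate.
    + left; eauto.
  - destruct H as [H|[H|[H|[H|[H|[H|[H|[H|[H|H]]]]]]]]]; unfold sigma, sig1, sig2, sig3, sig4 in *; inversion H; subst;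
    right; repeat split; auto; intros m Hm; destruct m; simpl in Hm; discriminate.
Qed.

Lemma NP_I : forall x, ~ NP (tapp tI x).
Proof. intros x. notNP. Qed.

Lemma valid_kont : forall N pi, validstack N pi -> valid N (kont pi).
Proof. induction 1; simpl; auto. repeat split; auto. Qed.

Lemma valid_step : forall N s s', step s s' -> valid N (fst s) -> validstack N (snd s) ->
  valid N (fst s') /\ validstack N (snd s').
Proof.
  intros N s s' H; inversion H; subst; simpl; intros Hv Hs; unfold validstack in *;
  repeat match goal with H : Forall _ (_ :: _) |- _ => inversion H; subst; clear H end;
  repeat split; simpl in *; try tauto; repeat constructor; try tauto; auto.
  - apply valid_kont; auto.
  - apply Hv.
Qed.

Lemma valid_exec : forall N s s', exec s s' -> valid N (fst s) -> validstack N (snd s) ->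
  valid N (fst s') /\ validstack N (snd s').
Proof.
  intros N s s' E. induction E; intros; auto.
  - eapply valid_step; eauto.
  - destruct IHE1; auto.
Qed.

Section CaseB.
Variables (N : nat) (G U phi : term) (k : nat).

Definition Y0 := Yc G U 0 0.
Definition Zt1 := Zt G Y0 (num k) phi.
Definition X1 := Xt G Y0 (num k) phi.
Definition X2 := Xt G Y0 (tapp sigma (num k)) (chiapp (num k) phi Zt1).
Definition gfun (n : nat) : term :=
  if n <? k then tapp (tapp tB tK) (tapp (tapp tC tI) (num n)) else num 0.
Definition eta := tapp (tapp tC (tapp (tapp tC (tbig gfun)) phi)) Zt1.

Inductive TrB : term -> term -> term -> Prop :=
| tb_refl t : TrB t t t
| tb_app a1 a2 a3 b1 b2 b3 : TrB a1 a2 a3 -> TrB b1 b2 b3 -> TrB (tapp a1 b1) (tapp a2 b2) (tapp a3 b3)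
| tb_w1 t1 t2 n : TrB t1 t2 (num n) -> TrB (tapp tI t1) (tapp tI t2) (num n)
| tb_w2 t1 t2 n : TrB t1 t2 (num n) -> TrB t1 (tapp tI t2) (num n)
| tb_base : TrB X1 X2 eta.

Lemma X2_notNP : ~ NP X2.
Proof. unfold X2, Xt. notNP. Qed.
Lemma eta_notNP : ~ NP eta.
Proof. unfold eta. notNP. Qed.

Lemma TrB_mid : forall t1 t2 t3, TrB t1 t2 t3 -> NP t2 -> t1 = t2 /\ t3 = t2.
Proof.
  induction 1; intros HNP.
  - auto.
  - destruct (NP_app _ _ HNP). destruct IHTrB1, IHTrB2; auto; subst; auto.
  - exfalso; eapply NP_I; eauto.
  - exfalso; eapply NP_I; eauto.
  - exfalso; apply X2_notNP; auto.
Qed.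

Lemma TrB_num : forall u1 u2 u3 n, TrB u1 u2 u3 -> u2 = num n -> u1 = num n /\ u3 = num n.
Proof.
  intros u1 u2 u3 n H E. destruct (TrB_mid _ _ _ H) as [-> ->]; subst; auto.
  left; eauto.
Qed.

Lemma TrB_right : forall t1 t2 t3, TrB t1 t2 t3 -> NP t3 ->
  (t1 = t3 /\ t2 = t3) \/ (exists n, t3 = num n /\ IwN t1 n /\ IwN t2 n).
Proof.
  induction 1; intros HNP.
  - auto.
  - destruct (NP_app_cases _ _ HNP) as [[Ha [m Hb]]|[Ha [Hb [Hna Hnb]]]].
    + subst. destruct IHTrB1 as [[-> ->]|[n [E _]]]; [| |exfalso; eapply num_neq_sigma; eauto].
      * unfold NP; right; left; auto.
      * destruct IHTrB2 as [[-> ->]|[n [E [I1 I2]]]]. unfold NP; left; eauto.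
        -- left; auto.
        -- apply num_inj in E; subst. right. exists (S n); split; auto. split; constructor; auto.
    + destruct IHTrB1 as [[-> ->]|[n [E _]]]; [exact Ha| |exfalso; eapply Hna; eauto].
      destruct IHTrB2 as [[-> ->]|[n' [E' _]]]; [exact Hb| left; auto |exfalso; eapply Hnb; eauto].
  - destruct IHTrB as [[-> ->]|[m [E [I1 I2]]]]; [unfold NP; left; eauto| |].
    + right; exists n; split; auto. split; constructor; apply IwN_num.
    + right; exists m; split; auto. split; constructor; auto.
  - destruct IHTrB as [[-> ->]|[m [E [I1 I2]]]]; [unfold NP; left; eauto| |].
    + right; exists n; split; auto. split; [apply IwN_num| constructor; apply IwN_num].
    + right; exists m; split; auto. split; [auto|constructor; auto].
  - exfalso; apply eta_notNP; auto.
Qed.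

Lemma TrB_IwN : forall u1 u2 n, TrB u1 u2 (num n) -> IwN u1 n /\ IwN u2 n.
Proof.
  intros u1 u2 n H. destruct (TrB_right _ _ _ H) as [[-> ->]|[m [E [I1 I2]]]].
  - unfold NP; left; eauto.
  - split; apply IwN_num.
  - apply num_inj in E; subst; auto.
Qed.


Definition Good (S : state) := valid N (fst S) /\ validstack N (snd S).

Hypothesis HZ : forall r, validstack N r -> pole Zt1 r.

Lemma stepn2I : forall t s, stepn 2 (tapp tI t, s) (t, s).
Proof. intros. econstructor. constructor. econstructor. constructor. constructor. Qed.

Lemma size_II : forall u, u <> tapp tI (tapp tI u).
Proof. intros u H. apply (f_equal size) in H. simpl in H. lia. Qed.

Lemma eta_run : forall u r, exec (eta, u::r) (tbig gfun, u :: phi :: Zt1 :: r).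
Proof. intros. runn 6. fin. Qed.

Lemma eta_nil : exec (eta, []) (tC, [tapp (tapp tC (tbig gfun)) phi; Zt1]).
Proof. runn 2. fin. Qed.

Lemma locB : forall S1 S2 S3, RelT TrB S1 S2 S3 -> poleS S2 -> poleS S3 -> Good S1 ->
  Prog (RelT TrB) S1 S2 S3.
Proof.
  intros [t1 s1] [t2 s2] [t3 s3] [HR HF] P2 P3 G1; simpl in *.
  inversion HR; subst.
  - apply refl_head; auto. exact tb_refl. exact tb_app. exact TrB_num.
  - eapply mk_prog; [constructor|constructor|constructor|]. split; simpl; auto. constructor; auto.
  - right. exists (t0, s1), (t4, s2), (num n, s3). split; [apply M_I|].
    split; [exists 2; split; [lia|apply stepn2I]|]. split; [apply rt_refl|]. split; auto.
  - right. exists (t1, s1), (t4, s2), (num n, s3). split; [apply rt_refl|].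
    split; [exists 2; split; [lia|apply stepn2I]|]. split; [apply rt_refl|]. split; auto.
  -
    destruct s3 as [|u3 r3].
    + exfalso. eapply (stuck_false _ _ P3 eta_nil); [|simpl; discriminate].
      intros u Hs; inversion Hs.
    + pose proof (poleS_fwd _ _ P3 (eta_run u3 r3)) as P3'.
      destruct (pole_cases _ P3') as [Hp|[S' Hs]]; [simpl in Hp; discriminate|].
      inversion Hs; subst. rename n into m.
      inversion HF as [|u1 u2 u3' r1 r2 r3' Hu HF']; subst.
      destruct (TrB_IwN _ _ _ Hu) as [I1 I2].
      apply IwN_NL in I1. apply IwN_NL in I2.
      destruct (m <? k) eqn:Hmk.
      * right. exists (phi, tapp tI u1 :: r1), (phi, tapp tI (tapp tI u2) :: r2),
          (phi, num m :: r3).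
        split; [|split; [|split]].
        -- unfold X1. eapply exec_trans; [apply M_X|].
           eapply exec_trans; [apply (chi_val k m); [apply NL_I, NL_num|exact I1]|].
           rewrite Hmk. apply M_I.
        -- apply exec_neq_plus; [|intros E; inversion E; eapply size_II; eauto].
           unfold X2. eapply exec_trans; [apply M_X|].
           eapply exec_trans; [apply (chi_val (S k) m); [apply NL_I, (NL_num (S k))|exact I2]|].
           replace (m <? S k) with true by (symmetry; apply Nat.ltb_lt; apply Nat.ltb_lt in Hmk; lia).
           eapply exec_trans; [apply M_I|].
           eapply exec_trans; [apply M_chiapp|].
           eapply exec_trans; [apply (chi_val k m); [apply NL_num|apply NL_I; exact I2]|].
           rewrite Hmk. apply rt_refl.
        -- eapply exec_trans; [apply eta_run|].
           eapply exec_trans; [apply rt_step; apply s_big|].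
           unfold gfun. rewrite Hmk. runn 9. fin.
        -- split; simpl; [apply tb_refl|]. constructor; auto.
           apply tb_w1. apply tb_w2. exact Hu.
      * left. apply (poleS_bwd _ (Zt1, r1)); [|unfold poleS; simpl; apply HZ].
        -- unfold X1. eapply exec_trans; [apply M_X|].
           eapply exec_trans; [apply (chi_val k m); [apply NL_I, NL_num|exact I1]|].
           rewrite Hmk. apply rt_refl.
        -- destruct G1 as [_ Hv]. inversion Hv; auto.
Qed.

Theorem simB : forall pi, poleS (U, X2 :: pi) -> poleS (U, eta :: pi) ->
  valid N U -> valid N X1 -> validstack N pi -> poleS (U, X1 :: pi).
Proof.
  intros pi P2 P3 HU HX Hpi.
  apply (sim_gen (RelT TrB) Good locB) with (S2 := (U, X2 :: pi)) (S3 := (U, eta :: pi)); auto.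
  - intros S S' [H1 H2] E. destruct (valid_exec N S S' E H1 H2). split; auto.
  - split; simpl. apply tb_refl. constructor. apply tb_base.
    clear. induction pi; constructor; auto using tb_refl.
  - split; simpl; auto. constructor; auto.
Qed.

End CaseB.


Lemma step_step1 : forall s s', step s s' -> (forall f, fst s <> tbig f) -> step1 s = Some s'.
Proof. intros s s' H Hf; inversion H; subst; simpl; auto. exfalso; eapply Hf; simpl; eauto. Qed.

Lemma iter_stuck : forall n S, poleS S -> step1 (iter n S) = None ->
  (forall f, fst (iter n S) <> tbig f) -> fst (iter n S) = tp.
Proof.
  intros n S P H1 H2. pose proof (poleS_fwd _ _ P (exec_iter n S)) as P'.
  destruct (pole_cases _ P') as [H|[S' Hs]]; auto.
  rewrite (step_step1 _ _ Hs H2) in H1. discriminate.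
Qed.

Ltac stuck n S P :=
  exfalso; let H := fresh in
  assert (H := iter_stuck n S P); vm_compute in H;
  discriminate (H eq_refl ltac:(intros; discriminate)).

Lemma RA_wrap_nat : forall a t, wrap (S a) t = tapp tI (wrap a t).
Proof. reflexivity. Qed.

Section CaseA.
Variables (G U : term).

Definition Yfam (y : term) := exists a b, y = Yc G U a b.
Definition NLs (k1 k2 : term) := exists m, NL m k1 /\ NL m k2.
Definition chiform (t k f z : term) := t = CF k f z \/ t = chiapp k f z.

Inductive RA : term -> term -> Prop :=
| ra_refl t : RA t t
| ra_app a1 a2 b1 b2 : RA a1 a2 -> RA b1 b2 -> RA (tapp a1 b1) (tapp a2 b2)
| ra_wR t1 t2 : RA t1 t2 -> RA t1 (tapp tI t2)
| ra_wL t1 t2 : RA t1 (tapp tI t2) -> RA (tapp tI t1) (tapp tI t2)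
| ra_X y1 y2 k1 k2 f1 f2 : Yfam y1 -> Yfam y2 -> NLs k1 k2 -> RA f1 f2 ->
    RA (Xt G y1 k1 f1) (Xt G y2 k2 f2)
| ra_Z y1 y2 k1 k2 f1 f2 : Yfam y1 -> Yfam y2 -> NLs k1 k2 -> RA f1 f2 ->
    RA (Zt G y1 k1 f1) (Zt G y2 k2 f2)
| ra_L y1 y2 k1 k2 f1 f2 : Yfam y1 -> Yfam y2 -> NLs k1 k2 -> RA f1 f2 ->
    RA (Lt y1 k1 f1) (Lt y2 k2 f2)
| ra_CF t1 t2 k1 k2 f1 f2 z1 z2 : chiform t1 k1 f1 z1 -> chiform t2 k2 f2 z2 ->
    NLs k1 k2 -> RA f1 f2 -> RA z1 z2 -> RA t1 t2
| ra_W k1 k2 : NLs k1 k2 -> RA (Wk k1) (Wk k2)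
| ra_FB a b f1 f2 u1 u2 : RA f1 f2 -> RA u1 u2 -> RA (FB (wrap a f1) u1) (FB (wrap b f2) u2).

Lemma RA_mid : forall t1 t2, RA t1 t2 -> NP t2 -> t1 = t2.
Proof.
  induction 1; intros HNP; auto.
  - destruct (NP_app _ _ HNP). f_equal; auto.
  - exfalso; eapply NP_I; eauto.
  - exfalso; eapply NP_I; eauto.
  - exfalso; revert HNP; unfold Xt; notNP.
  - exfalso; revert HNP; unfold Zt; notNP.
  - exfalso; revert HNP; unfold Lt; notNP.
  - exfalso; destruct H0; subst; revert HNP; [unfold CF|unfold chiapp]; notNP.
  - exfalso; revert HNP; unfold Wk; notNP.
  - exfalso; revert HNP; unfold FB; notNP.
Qed.

Definition R3 (t1 t2 t3 : term) := RA t1 t2 /\ t3 = t2.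

Lemma R3_num : forall u1 u2 u3 n, R3 u1 u2 u3 -> u2 = num n -> u1 = num n /\ u3 = num n.
Proof.
  intros u1 u2 u3 n [H ->] E. subst. split; auto. apply RA_mid; auto. left; eauto.
Qed.

Lemma F2F3 : forall s1 s2, Forall2 RA s1 s2 -> F3 R3 s1 s2 s2.
Proof. induction 1; constructor; auto. split; auto. Qed.
Lemma F3F2 : forall s1 s2 s3, F3 R3 s1 s2 s3 -> Forall2 RA s1 s2 /\ s3 = s2.
Proof. induction 1; auto. destruct H as [H ->]. destruct IHF3 as [? ->]. split; auto. Qed.

Definition RelA (S1 S2 : state) := RA (fst S1) (fst S2) /\ Forall2 RA (snd S1) (snd S2).

Definition Prog2 (S1 S2 : state) :=
  poleS S1 \/ exists S1' S2', exec S1 S1' /\ (exists m, 0 < m /\ stepn m S2 S2') /\ RelA S1' S2'.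

Lemma RA_wraps : forall a b t1 t2, RA t1 t2 -> RA (wrap (S a) t1) (wrap (S b) t2).
Proof.
  intros a b t1 t2 H.
  assert (H0 : RA (tapp tI t1) (tapp tI t2)) by (apply ra_app; auto using ra_refl).
  assert (H1 : forall a, RA (wrap (S a) t1) (tapp tI t2)).
  { induction a0; simpl; auto. apply ra_wL. exact IHa0. }
  induction b; simpl. apply H1. apply ra_wR. exact IHb.
Qed.

Lemma neq_len : forall (t t' : term) (s s' : stack), length s <> length s' -> ((t, s) : state) <> (t', s').
Proof. intros t t' s s' H E. inversion E; subst; auto. Qed.

Lemma chi_gen0 : forall k f z u r, NL 0 k ->
  exec (chi, k::f::z::u::r) (tapp tI z, r).
Proof.
  intros. eapply exec_trans; [apply M_chi|]. simpl in H.
  eapply exec_trans; [apply H|]. eapply exec_trans; [apply M_ld0|]. apply M_n0.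
Qed.

Lemma chi_genS : forall m k f z u r, NL (S m) k -> exists k', NL m k' /\
  exec (chi, k::f::z::u::r) (u, a_::ld1::tapp tI (Wk k')::FB f u::tapp tI z::r).
Proof.
  intros. simpl in H. destruct (H a_ ld0 (Wu u :: FB f u :: tapp tI z :: r)) as [k' [Hk E]].
  exists k'; split; auto. eapply exec_trans; [apply M_chi|].
  eapply exec_trans; [apply E|]. eapply exec_trans; [apply M_a|]. apply M_Wu.
Qed.

Lemma chiform_run : forall t k f z u r, chiform t k f z -> exists c, c <= 1 /\
  exec (t, u::r) (chi, wrap c k :: wrap c f :: wrap c z :: u :: r).
Proof.
  intros t k f z u r [->| ->]. exists 1; split; auto. apply M_CF.
  exists 0; split; auto. apply M_chiapp.
Qed.

Lemma chiform_nil : forall t k f z, chiform t k f z -> poleS (t, []) -> False.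
Proof.
  intros t k f z [->| ->] P. stuck 51 (CF k f z, @nil term) P. stuck 24 (chiapp k f z, @nil term) P.
Qed.

Lemma NLs_wrap : forall c1 c2 k1 k2, NLs k1 k2 -> NLs (wrap c1 k1) (wrap c2 k2).
Proof. intros c1 c2 k1 k2 [m [H1 H2]]; exists m; split; apply NL_wrap; auto. Qed.

Ltac lenneq := apply neq_len; simpl; lia.

Lemma R3refl : forall t, R3 t t t.
Proof. split; auto using ra_refl. Qed.
Lemma R3app : forall a1 a2 a3 b1 b2 b3, R3 a1 a2 a3 -> R3 b1 b2 b3 ->
  R3 (tapp a1 b1) (tapp a2 b2) (tapp a3 b3).
Proof. intros ? ? ? ? ? ? [H1 ->] [H2 ->]; split; auto using ra_app. Qed.

Lemma plus_of : forall S S', exec S S' -> S <> S' -> exists m, 0 < m /\ stepn m S S'.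
Proof. exact exec_neq_plus. Qed.

Lemma locA : forall t1 t2, RA t1 t2 -> forall s1 s2, Forall2 RA s1 s2 -> poleS (t2, s2) ->
  Prog2 (t1, s1) (t2, s2).
Proof.
  induction 1; intros s1 s2 HF P2.
  - pose proof (refl_head R3 R3refl R3app R3_num t s1 s2 s2 (F2F3 _ _ HF) P2) as H.
    destruct H as [H|[S1' [S2' [S3' [E1 [E2 [E3 [HR HF3]]]]]]]]; [left; auto|right].
    exists S1', S2'. split; auto. split; auto. apply F3F2 in HF3 as [? _].
    destruct HR; split; auto.
  - right. exists (a1, b1::s1), (a2, b2::s2). split; [apply rt_step; constructor|].
    split; [exists 1; split; [lia|apply stepn1; constructor]|].
    split; simpl; auto; constructor; auto.
  - right. exists (t1, s1), (t2, s2). split; [apply rt_refl|].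
    split; [exists 2; split; [lia|apply stepn2I]|]. split; auto.
  - destruct (IHRA s1 s2 HF P2) as [Hp|[S1' [S2' [E1 [E2 HR]]]]].
    + left. eapply poleS_bwd; [apply M_I|apply Hp].
    + right. exists S1', S2'. split; [eapply exec_trans; [apply M_I|exact E1]|]; auto.
  - destruct s2 as [|u2 r2].
    + stuck 74 (Xt G y2 k2 f2, @nil term) P2.
    + inversion HF as [|u1 u2' r1 r2' Hu HF']; subst.
      pose proof H1 as HN. destruct H1 as [m [Hk1 Hk2]].
      destruct m.
      * right. exists (Zt G y1 k1 f1, r1), (Zt G y2 k2 f2, r2). split.
        { eapply exec_trans; [apply M_X|]. eapply exec_trans; [apply chi_gen0; apply NL_I; auto|]. apply M_I. }
        split.
        { apply plus_of; [|lenneq]. eapply exec_trans; [apply M_X|].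
          eapply exec_trans; [apply chi_gen0; apply NL_I; auto|]. apply M_I. }
        split; simpl; auto. apply ra_Z; auto.
      * destruct (chi_genS m (tapp tI k1) (tapp tI f1) (Zt G y1 k1 f1) u1 r1 (NL_I _ _ Hk1))
          as [k1' [Hk1' E1]].
        destruct (chi_genS m (tapp tI k2) (tapp tI f2) (Zt G y2 k2 f2) u2 r2 (NL_I _ _ Hk2))
          as [k2' [Hk2' E2]].
        right. eexists (u1, _), (u2, _). split; [eapply exec_trans; [apply M_X|exact E1]|].
        split; [apply plus_of; [eapply exec_trans; [apply M_X|exact E2]|lenneq]|].
        split; simpl; auto.
        constructor; [apply ra_refl|]. constructor; [apply ra_refl|].
        constructor; [apply ra_app; [apply ra_refl|apply ra_W; exists m; auto]|].
        constructor; [apply (ra_FB 1 1); auto|].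
        constructor; [apply ra_app; [apply ra_refl|apply ra_Z; auto]|]. auto.
  - right. exists (G, Lt y1 k1 f1 :: s1), (G, Lt y2 k2 f2 :: s2). split; [apply M_Z|].
    split; [apply plus_of; [apply M_Z|lenneq]|]. split; simpl; [apply ra_refl|].
    constructor; auto. apply ra_L; auto.
  - destruct s2 as [|u2 r2].
    + stuck 37 (Lt y2 k2 f2, @nil term) P2.
    + inversion HF as [|u1 u2' r1 r2' Hu HF']; subst.
      destruct H as [a1 [b1 ->]]. destruct H0 as [a2 [b2 ->]].
      right. eexists (U, _), (U, _). split.
      { eapply exec_trans; [apply M_L|]. apply M_Y. }
      split.
      { apply plus_of. eapply exec_trans; [apply M_L|]. apply M_Y.
        intros E; injection E as Ht Hs. apply (f_equal size) in Hs.
        unfold Xt, CF in Hs; simpl in Hs; lia. }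
      split; simpl; [apply ra_refl|]. constructor; auto.
      apply ra_X.
      * exists (S a1), (S b1); auto.
      * exists (S a2), (S b2); auto.
      * destruct H1 as [m [Hm1 Hm2]]. exists (S m); split; apply NL_BsI; auto.
      * apply ra_CF with k1 k2 f1 f2 u1 u2; auto; left; reflexivity.
  - destruct s2 as [|u2 r2].
    + exfalso; eapply chiform_nil; eauto.
    + inversion HF as [|u1 u2' r1 r2' Hu HF']; subst.
      destruct (chiform_run t1 k1 f1 z1 u1 r1 H) as [c1 [Hc1 E1]].
      destruct (chiform_run t2 k2 f2 z2 u2 r2 H0) as [c2 [Hc2 E2]].
      destruct H1 as [m [Hk1 Hk2]].
      apply (NL_wrap c1) in Hk1. apply (NL_wrap c2) in Hk2.
      destruct m.
      * right. exists (tapp tI (wrap c1 z1), r1), (tapp tI (wrap c2 z2), r2). split.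
        { eapply exec_trans; [exact E1|]. apply chi_gen0; auto. }
        split; [apply plus_of; [eapply exec_trans; [exact E2|]; apply chi_gen0; auto|lenneq]|].
        split; simpl; auto. apply (RA_wraps c1 c2); auto.
      * destruct (chi_genS m _ (wrap c1 f1) (wrap c1 z1) u1 r1 Hk1) as [k1' [Hk1' E1']].
        destruct (chi_genS m _ (wrap c2 f2) (wrap c2 z2) u2 r2 Hk2) as [k2' [Hk2' E2']].
        right. eexists (u1, _), (u2, _). split; [eapply exec_trans; [exact E1|exact E1']|].
        split; [apply plus_of; [eapply exec_trans; [exact E2|exact E2']|lenneq]|].
        split; simpl; auto.
        constructor; [apply ra_refl|]. constructor; [apply ra_refl|].
        constructor; [apply ra_app; [apply ra_refl|apply ra_W; exists m; auto]|].
        constructor; [apply ra_FB; auto|].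
        constructor; [apply (RA_wraps c1 c2); auto|]. auto.
  - destruct H as [m [Hk1 Hk2]]. destruct s2 as [|u2 r2].
    + exfalso. assert (E0 : exec (Wk k2, []) (k2, [a_; ld0])) by (runn 2; fin).
      pose proof (poleS_fwd _ _ P2 E0) as P3.
      destruct m.
      * pose proof (poleS_fwd _ _ P3 (Hk2 a_ ld0 [])) as P4. stuck 1 (ld0, @nil term) P4.
      * destruct (Hk2 a_ ld0 []) as [k' [_ E]].
        pose proof (poleS_fwd _ _ P3 E) as P4. stuck 4 (a_, [tapp (tapp k' a_) ld0]) P4.
    + inversion HF as [|u1 u2' r1 r2' Hu HF']; subst.
      destruct m.
      * right. exists (num 0, r1), (num 0, r2). split.
        { eapply exec_trans; [apply M_Wk|]. eapply exec_trans; [apply Hk1|]. apply M_ld0. }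
        split; [apply plus_of; [|lenneq]|].
        { eapply exec_trans; [apply M_Wk|]. eapply exec_trans; [apply Hk2|]. apply M_ld0. }
        split; simpl; auto. apply ra_refl.
      * destruct (Hk1 a_ ld0 (u1::r1)) as [k1' [Hk1' E1]].
        destruct (Hk2 a_ ld0 (u2::r2)) as [k2' [Hk2' E2]].
        right. exists (u1, tapp tI (Wk k1') :: r1), (u2, tapp tI (Wk k2') :: r2). split.
        { eapply exec_trans; [apply M_Wk|]. eapply exec_trans; [apply E1|]. apply M_a. }
        split; [apply plus_of|].
        { eapply exec_trans; [apply M_Wk|]. eapply exec_trans; [apply E2|]. apply M_a. }
        { intros E; injection E as E4 E3; subst; unfold Wk in *; congruence. }
        split; simpl; auto; constructor; auto.
        apply ra_app; [apply ra_refl|]. apply ra_W; exists m; auto.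
  - right. exists (f1, tapp tI u1 :: s1), (f2, tapp tI u2 :: s2). split.
    { eapply exec_trans; [apply M_FB|]. apply wrap_exec. }
    split; [apply plus_of; [eapply exec_trans; [apply M_FB|]; apply wrap_exec|lenneq]|].
    split; simpl; auto; constructor; auto. apply ra_app; auto using ra_refl.
Qed.

Theorem simA : forall S1 S2, RelA S1 S2 -> poleS S2 -> poleS S1.
Proof.
  intros S1 S2 HR P2.
  apply (sim_gen (fun S1 S2 S3 => RelA S1 S2 /\ S3 = S2) (fun _ => True)) with S2 S2; auto.
  intros [t1 s1] [t2 s2] S3 [[H1 H2] ->] P P' _.
  destruct (locA t1 t2 H1 s1 s2 H2 P) as [H|[S1' [S2' [E1 [[m [Hm E2]] HR']]]]].
  - left; auto.
  - right. exists S1', S2', S2'. repeat split; auto.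
    + exists m; auto.
    + eapply stepn_exec; eauto.
    + apply HR'.
    + apply HR'.
Qed.

End CaseA.


Lemma fin_choice {V : Type} (d : V) (Pr : nat -> V -> Prop) : forall k,
  (forall i, i < k -> exists a, Pr i a) -> exists a : nat -> V, forall i, i < k -> Pr i (a i).
Proof.
  induction k; intros H.
  - exists (fun _ => d); intros; lia.
  - destruct IHk as [a Ha]. { intros; apply H; lia. }
    destruct (H k (Nat.lt_succ_diag_r k)) as [ak Hak].
    exists (fun i => if i =? k then ak else a i). intros i Hi.
    destruct (Nat.eqb_spec i k). subst; auto. apply Ha; lia.
Qed.

Lemma valid_num : forall N n, valid N (num n) /\ noparam (num n).
Proof. induction n; simpl; repeat split; tauto. Qed.

Lemma valid_wrap : forall N a t, valid N t -> valid N (wrap a t).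
Proof. induction a; simpl; auto. Qed.

Lemma F2refl : forall G U (l : stack), Forall2 (RA G U) l l.
Proof. induction l; constructor; auto using ra_refl. Qed.

Lemma pole_fwdS : forall t pi S', pole t pi -> exec (t, pi) S' -> poleS S'.
Proof. intros t pi S' P E. apply (poleS_fwd (t, pi)); auto. Qed.

Ltac vtac := repeat match goal with
  | |- _ /\ _ => split
  | |- valid _ (num _) => apply valid_num
  | |- valid _ (wrap _ _) => apply valid_wrap
  | |- valid _ (tapp _ _) => simpl valid
  | |- True => exact I
  end; auto.

Theorem lemma5 (N : nat)
  (V : Type) (iota : nat -> V) (app : V -> V -> V)
  (Hgm : forall (k : nat) (a : nat -> V),
      exists f : V, forall i, i < k -> app f (iota i) = a i)
  (F : V -> V -> stack -> Prop)
  (G U : term) (HGv : valid N G) (HUv : valid N U)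
  (HG : realizes N G
          (forallV (fun n => neg N (forallV (fun x => neg N (F n x))))))
  (HU : realizes N U
          (forallV (fun f => neg N (forallN (fun n => F (iota n) (app f (iota n)))))))
  (k : nat) (phi : term) (Hphiv : valid N phi)
  (Hphi : forall i, i < k -> exists a_i : V, realizes N (tapp phi (num i)) (F (iota i) a_i)) :
  ~ realizes N (tapp (tapp (tapp (tapp Psi G) U) (num k)) phi) (bot N) ->
  exists (a_k : V) (zeta : term),
    valid N zeta /\ realizes N zeta (F (iota k) a_k) /\
    ~ realizes N
        (tapp (tapp (tapp (tapp Psi G) U) (tapp sigma (num k)))
              (tapp (tapp (tapp chi (num k)) phi) zeta))
        (bot N).
Proof.
  intros Hnot.
  assert (HY0 : valid N (Yc G U 0 0)) by (unfold Yc; vtac).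
  assert (HZv : valid N (Zt1 G U phi k)) by (unfold Zt1, Zt, Y0; vtac).
  destruct (classic (forall r, validstack N r -> pole (Zt1 G U phi k) r)) as [HZ|HZ].
  -
    exists (iota k), (Zt1 G U phi k). split; [exact HZv|]. split.
    { intros pi Hpi _. apply HZ; auto. }
    intros Hr2. apply Hnot. intros pi Hpi _.
    assert (P2 : poleS (U, X2 G U phi k :: pi)).
    { eapply pole_fwdS; [apply (Hr2 pi Hpi Hpi)|]. apply M_Psi. }
    destruct (fin_choice (iota 0) (fun i a => realizes N (tapp phi (num i)) (F (iota i) a)) k Hphi)
      as [a Ha].
    destruct (Hgm k a) as [f Hf].
    assert (Hev : valid N (eta G U phi k)).
    { unfold eta. simpl valid. repeat split; auto;
      try (unfold gfun; destruct (_ <? _); simpl; repeat split; apply valid_num).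
      all: unfold Zt1, Zt, Y0; vtac. }
    assert (P3 : poleS (U, eta G U phi k :: pi)).
    { apply (HU (eta G U phi k :: pi)). constructor; auto.
      exists f. exists (eta G U phi k), pi. split; auto. split; auto. split; [|exact Hpi].
      intros pi' Hpi' [n [pi'' [-> HFn]]].
      change (poleS (eta G U phi k, num n :: pi'')).
      eapply poleS_bwd; [apply eta_run|].
      eapply poleS_bwd; [apply rt_step; apply s_big|].
      inversion Hpi' as [|? ? _ Hpi'']; subst.
      unfold gfun. destruct (n <? k) eqn:Hnk.
      - apply Nat.ltb_lt in Hnk.
        eapply poleS_bwd; [runn 9; fin|].
        eapply poleS_fwd; [|apply rt_step; constructor].
        apply (Ha n Hnk); auto. rewrite <- (Hf n Hnk); auto.
      - eapply poleS_bwd; [apply M_n0|]. apply HZ; auto. }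
    assert (HX1 : valid N (X1 G U phi k)) by (unfold X1, Xt, Y0; vtac).
    pose proof (simB N G U phi k HZ pi P2 P3 HUv HX1 Hpi) as P1.
    exact (poleS_bwd (tapp (tapp (tapp (tapp Psi G) U) (num k)) phi, pi) _ (M_Psi G U (num k) phi pi) P1).
  -
    apply not_all_ex_not in HZ as [r HZ]. apply imply_to_and in HZ as [Hr HZ].
    assert (HL : ~ pole G (Lt (Yc G U 0 0) (num k) phi :: r)).
    { intros P. apply HZ. eapply pole_bwd; [apply M_Z|]. exact P. }
    assert (HLv : valid N (Lt (Yc G U 0 0) (num k) phi)) by (unfold Lt; vtac).
    assert (HnR : ~ realizes N (Lt (Yc G U 0 0) (num k) phi)
                     (forallV (fun x => neg N (F (iota k) x)))).
    { intros HR. apply HL. apply HG. { constructor; auto. }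
      exists (iota k), (Lt (Yc G U 0 0) (num k) phi), r.
      split; [reflexivity|]. split; [exact HLv|]. split; [exact HR|exact Hr]. }
    apply not_all_ex_not in HnR as [pi HnR].
    apply imply_to_and in HnR as [Hpi HnR]. apply imply_to_and in HnR as [[x Hx] HnP].
    destruct Hx as [z0 [pi1 [-> [Hz0v [Hz0 Hpi1]]]]].
    exists x, z0. split; auto. split; auto.
    intros Hr2. apply HnP.
    assert (P2 : poleS (U, Xt G (Yc G U 0 0) (tapp sigma (num k)) (chiapp (num k) phi z0) :: pi1)).
    { eapply pole_fwdS; [apply (Hr2 pi1 Hpi1 Hpi1)|]. apply M_Psi. }
    assert (P1 : poleS (U, Xt G (Yc G U 1 1) (BsI (num k)) (CF (num k) phi z0) :: pi1)).
    { apply (simA G U _ (U, Xt G (Yc G U 0 0) (tapp sigma (num k))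
                                         (chiapp (num k) phi z0) :: pi1)); auto.
      split; simpl; [apply ra_refl|]. constructor; [|apply F2refl].
      apply ra_X.
      - exists 1, 1; reflexivity.
      - exists 0, 0; reflexivity.
      - exists (S k). split. apply NL_BsI, NL_num. apply (NL_num (S k)).
      - apply ra_CF with (num k) (num k) phi phi z0 z0.
        left; reflexivity. right; reflexivity. exists k; split; apply NL_num.
        apply ra_refl. apply ra_refl. }
    change (poleS (Lt (Yc G U 0 0) (num k) phi, z0 :: pi1)).
    eapply poleS_bwd; [|exact P1].
    eapply exec_trans; [apply M_L|]. apply M_Y.
Qed.
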